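(* Let $G=(U,\alpha)$ and $H=(V,\beta)$ be graphs and let $K=(U\times V,\gamma)$ be a graph. Then $K$ is a graph joining of $G$ and $H$ if and only if $G\mid K$ under $\pi_1$ and $H\mid K$ under $\pi_2$, where $\pi_1(u,v)=u$ and $\pi_2(u,v)=v$.
   Context: A weight function on finite $U$ is $\alpha:U\times U\to\mathbb{R}$, $\alpha\ge0$, symmetric, summing to $1$; degree $p(u)=\sum_{u'}\alpha(u,u')$; a graph is $(U,\alpha)$. For $G=(U,\alpha)$, $H=(V,\beta)$ with degrees $p,q$, a weight joining is a weight function $\gamma$ on $U\times V$ with degree $r(u,v)=\sum_{(u',v')}\gamma((u,v),(u',v'))$ such that $\sum_v r(u,v)=p(u)$, $\sum_u r(u,v)=q(v)$, $p(u)\sum_{\tilde v}\gamma((u,v),(u',\tilde v))=\alpha(u,u')r(u,v)$ and $q(v)\sum_{\tilde u}\gamma((u,v),(\tilde u,v'))=\beta(v,v')r(u,v)$ for all $u,u',v,v'$; a graph joining of $G,H$ is $(U\times V,\gamma)$ with $\gamma$ a weight joining. For graphs $G=(U,\alpha)$, $H=(V,\beta)$ with degrees $p,q$, $H\mid G$ under a surjective map $\phi:U\to V$ means (i) $q(v)=\sum_{u\in\phi^{-1}(v)}p(u)$ for all $v$, and (ii) $q(v)\sum_{u'\in\phi^{-1}(v')}\alpha(u,u')=p(u)\beta(v,v')$ for all $v,v'\in V$ and all $u\in\phi^{-1}(v)$. *)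

(* Defs.v *)
From mathcomp Require Import all_boot all_order all_algebra.
Set Implicit Arguments. Unset Strict Implicit. Unset Printing Implicit Defensive.
Import Order.TTheory GRing.Theory Num.Theory.
Local Open Scope ring_scope.

Definition weight_fun (R : realFieldType) (U : finType) (a : U -> U -> R) : Prop :=
  [/\ (forall u u', 0 <= a u u'),
      (forall u u', a u u' = a u' u) &
      \sum_(u : U) \sum_(u' : U) a u u' = 1].

Definition deg (R : realFieldType) (U : finType) (a : U -> U -> R) (u : U) : R :=
  \sum_(u' : U) a u u'.

Definition weight_joining (R : realFieldType) (U V : finType)
  (a : U -> U -> R) (b : V -> V -> R) (g : (U * V)%type -> (U * V)%type -> R) : Prop :=
  [/\ weight_fun g,
      (forall u, \sum_(v : V) deg g (u, v) = deg a u),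
      (forall v, \sum_(u : U) deg g (u, v) = deg b v),
      (forall u u' v, deg a u * (\sum_(vt : V) g (u, v) (u', vt)) = a u u' * deg g (u, v)) &
      (forall u v v', deg b v * (\sum_(ut : U) g (u, v) (ut, v')) = b v v' * deg g (u, v))].

(* H = (V,b) | G = (U,a) under the surjective map phi : U -> V. *)
Definition graph_divides (R : realFieldType) (U V : finType)
  (b : V -> V -> R) (a : U -> U -> R) (phi : U -> V) : Prop :=
  [/\ (forall v, exists u, phi u = v),
      (forall v, deg b v = \sum_(u | phi u == v) deg a u) &
      (forall v v' u, phi u = v ->
         deg b v * (\sum_(u' | phi u' == v') a u u') = deg a u * b v v')].

(* Main.v *)
Require Import Defs.
From mathcomp Require Import all_boot all_order all_algebra.
Set Implicit Arguments. Unset Strict Implicit. Unset Printing Implicit Defensive.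
Import Order.TTheory GRing.Theory Num.Theory.
Local Open Scope ring_scope.

Lemma sum_fst (R : realFieldType) (U V : finType) (F : (U * V)%type -> R) u :
  \sum_(x | x.1 == u) F x = \sum_(v : V) F (u, v).
Proof.
transitivity (\sum_(i | i == u) \sum_(v : V) F (i, v)); last by rewrite big_pred1_eq.
rewrite (pair_big_dep (fun i => i == u) (fun _ _ => true) (fun i j => F (i, j))) /=.
by apply: eq_big => [[i j]|[i j] _] //=; rewrite andbT.
Qed.

Lemma sum_snd (R : realFieldType) (U V : finType) (F : (U * V)%type -> R) v :
  \sum_(x | x.2 == v) F x = \sum_(u : U) F (u, v).
Proof.
transitivity (\sum_(u : U) \sum_(j | j == v) F (u, j)); last first.
  by apply: eq_bigr => i _; rewrite big_pred1_eq.
rewrite (pair_big_dep (fun _ => true) (fun _ j => j == v) (fun i j => F (i, j))) /=.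
by apply: eq_big => [[i j]|[i j] _] //=.
Qed.

Lemma wf_inhabited (R : realFieldType) (U : finType) (a : U -> U -> R) :
  weight_fun a -> exists u : U, true.
Proof.
case=> _ _ H1; case: (pickP (fun _ : U => true)) => [u _|H]; first by exists u.
exfalso; move: H1; rewrite big1 => [|i _]; first by move/eqP; rewrite eq_sym oner_eq0.
by have := H i.
Qed.

Theorem proposition4p2 (R : realFieldType) (U V : finType)
  (a : U -> U -> R) (b : V -> V -> R) (g : (U * V)%type -> (U * V)%type -> R) :
  weight_fun a -> weight_fun b -> weight_fun g ->
  (weight_joining a b g <->
   (graph_divides a g (@fst U V) /\ graph_divides b g (@snd U V))).
Proof.
move=> wa wb wg.
have [u0 _] := wf_inhabited wa; have [v0 _] := wf_inhabited wb.
split.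
  case=> _ h2 h3 h4 h5; split; split.
  - by move=> u; exists (u, v0).
  - by move=> u; rewrite sum_fst h2.
  - move=> u u' [x y] /= ->; rewrite sum_fst h4 mulrC //.
  - by move=> v; exists (u0, v).
  - by move=> v; rewrite sum_snd h3.
  - move=> v v' [x y] /= ->; rewrite sum_snd h5 mulrC //.
case=> [[_ h2 h3] [_ h2' h3']]; split => //.
- by move=> u; rewrite -sum_fst h2.
- by move=> v; rewrite -sum_snd h2'.
- by move=> u u' v; rewrite -(sum_fst (fun y => g (u, v) y)) (h3 _ _ (u, v)) // mulrC.
- by move=> u v v'; rewrite -(sum_snd (fun y => g (u, v) y)) (h3' _ _ (u, v)) // mulrC.
Qed.
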